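(* Let $P$ be a finite poset, $I\in\mathcal{IC}(P)$ and $x\in\nabla(I)-I$. Then $x\in\mathrm{Row}(I)$ if and only if $x\in\lceil I\rceil$.
   Context: All posets are finite. For a poset $P$, a subset $I\subseteq P$ is interval-closed if for all $x,y\in I$ and $z\in P$ with $x\le z\le y$ we have $z\in I$; $\mathcal{IC}(P)$ is the set of interval-closed subsets of $P$. For $x\in P$ the toggle $t_x:\mathcal{IC}(P)\to\mathcal{IC}(P)$ is defined by $t_x(I)=I\triangle\{x\}$ if $I\triangle\{x\}\in\mathcal{IC}(P)$ and $t_x(I)=I$ otherwise. Rowmotion is $\mathrm{Row}=t_{x_1}\circ t_{x_2}\circ\cdots\circ t_{x_N}:\mathcal{IC}(P)\to\mathcal{IC}(P)$, where $(x_1,\dots,x_N)$ is a linear extension of $P$ (so elements are toggled from the top of the poset down); this does not depend on the choice of linear extension. $\nabla(I)$ is the smallest order filter containing $I$, and the ceiling $\lceil I\rceil$ is the set of minimal elements of $\nabla(I)-I$. *)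

(* Defs.v *)
From mathcomp Require Import all_boot all_order.
Set Implicit Arguments. Unset Strict Implicit. Unset Printing Implicit Defensive.
Import Order.Theory.
Local Open Scope order_scope.

Section IC.
Variables (d : Order.disp_t) (P : finPOrderType d).

Definition interval_closed (I : {set P}) : bool :=
  [forall x in I, forall y in I, forall z, (x <= z) && (z <= y) ==> (z \in I)].

Definition toggle (x : P) (I : {set P}) : {set P} :=
  let J := if x \in I then I :\ x else x |: I in
  if interval_closed J then J else I.

Definition linear_extension (s : seq P) : Prop :=
  [/\ uniq s, forall x : P, x \in s &
      forall x y : P, x < y -> (index x s < index y s)%N].

Definition rowmotion (s : seq P) (I : {set P}) : {set P} :=
  foldr toggle I s.

Definition nabla (I : {set P}) : {set P} :=
  [set y | [exists x in I, x <= y]].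

Definition ceiling (I : {set P}) : {set P} :=
  let D := nabla I :\: I in
  [set y in D | [forall z in D, ~~ (z < y)]].

End IC.

(* Main.v *)
Require Import Defs.
From mathcomp Require Import all_boot all_order.
Import Order.Theory.
Local Open Scope order_scope.

Section Aux.
Variables (d : Order.disp_t) (P : finPOrderType d).

Lemma ICP (I : {set P}) :
  reflect (forall u v z, u \in I -> v \in I -> u <= z -> z <= v -> z \in I)
          (interval_closed I).
Proof.
apply: (iffP idP).
- move=> /forall_inP H u v z uI vI uz zv.
  by move: (H u uI) => /forall_inP /(_ v vI) /forallP /(_ z); rewrite uz zv.
- move=> H; apply/forall_inP => u uI; apply/forall_inP => v vI.
  apply/forallP => z; apply/implyP => /andP [uz zv]; exact: H uI vI uz zv.
Qed.

Lemma toggle_IC (y : P) (K : {set P}) :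
  interval_closed K -> interval_closed (toggle y K).
Proof. by rewrite /toggle; case: ifP. Qed.

Lemma foldr_IC (s : seq P) (K : {set P}) :
  interval_closed K -> interval_closed (foldr (@toggle _ P) K s).
Proof. by elim: s => //= y s IH HK; apply: toggle_IC; apply: IH. Qed.

Lemma toggle_other (y x : P) (K : {set P}) :
  y != x -> (x \in toggle y K) = (x \in K).
Proof.
move=> yx; rewrite /toggle; case: ifP => // _; case: ifP => _.
- by rewrite in_setD1 eq_sym yx.
- by rewrite in_setU1 eq_sym (negbTE yx).
Qed.

Lemma foldr_other (s : seq P) (x : P) (K : {set P}) :
  x \notin s -> (x \in foldr (@toggle _ P) K s) = (x \in K).
Proof.
elim: s => //= y s IH; rewrite in_cons negb_or => /andP [xy xs].
by rewrite toggle_other ?IH // eq_sym.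
Qed.

End Aux.

Theorem lemma2 (d : Order.disp_t) (P : finPOrderType d) (s : seq P)
    (I : {set P}) (x : P) :
  linear_extension s -> interval_closed I -> x \in nabla I :\: I ->
  (x \in rowmotion s I) = (x \in ceiling I).
Proof.
case=> Hu Hin Hlt HI xD.
have xD' := xD.
move: xD' => /setDP [xN xI].
move: xN; rewrite inE => /exists_inP [a aI ax].
have ax' : a < x by rewrite lt_neqAle ax andbT; apply/eqP => E; rewrite -E aI in xI.
move: Hu Hlt; case/splitPr: (Hin x) => s1 s2 Hu Hlt.
move: (Hu); rewrite cat_uniq => /and3P [_ H1 H2].
move: H1; rewrite /= negb_or => /andP [xs1 dis].
move: H2 => /= /andP [xs2 _].
set J := foldr (@toggle _ P) I s2.
have HJ : interval_closed J by apply: foldr_IC.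
have HJI : forall y, y < x -> (y \in J) = (y \in I).
  move=> y yx; apply: foldr_other; apply/negP => ys2.
  have := Hlt _ _ yx.
  have ys1 : y \notin s1.
    by apply/negP => ys1; move/hasP: dis; apply; exists y.
  rewrite !index_cat (negbTE xs1) (negbTE ys1) /= eqxx /=.
  have -> : (x == y) = false by rewrite eq_sym (lt_eqF yx).
  by rewrite addn0 ltnNge leq_addr.
have xJ : x \notin J by rewrite /J foldr_other.
rewrite /rowmotion foldr_cat /= foldr_other //.
have -> : (x \in toggle x J) = interval_closed (x |: J).
  rewrite /toggle (negbTE xJ); case: ifP => _; first by rewrite setU11.
  by rewrite (negbTE xJ).
apply/idP/idP.
- move=> /ICP HC; rewrite inE xD /=; apply/forall_inP => z zD; apply/negP => zx.
  move: zD => /setDP []; rewrite inE => /exists_inP [b bI bz] zI.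
  have bx : b < x by apply: le_lt_trans bz zx.
  have : z \in x |: J.
    apply: (HC b x z) => //; first by rewrite in_setU1 HJI // bI orbT.
      by rewrite setU11.
    exact: ltW.
  by rewrite in_setU1 (lt_eqF zx) /= HJI // (negbTE zI).
- rewrite inE => /andP [_ /forall_inP Hmin].
  have aJ : a \in J by rewrite HJI.
  move/ICP: HJ => HJ.
  apply/ICP => u v z; rewrite !in_setU1 => /orP [/eqP -> | uJ] /orP [/eqP -> | vJ] uz zv.
  + by rewrite (@le_anti _ _ z x) ?uz ?zv ?eqxx.
  + by rewrite (HJ a v z aJ vJ) ?orbT // (le_trans ax uz).
  + case: (eqVneq z x) => [-> // | zx]; apply/orP; right.
    have zlt : z < x by rewrite lt_neqAle zx zv.
    have ux : u < x by apply: le_lt_trans uz zlt.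
    rewrite HJI //; apply/negPn/negP => zI.
    have zD : z \in nabla I :\: I.
      by rewrite inE zI /= inE; apply/exists_inP; exists u => //; rewrite -HJI.
    by move: (Hmin z zD); rewrite zlt.
  + by rewrite (HJ u v z uJ vJ uz zv) orbT.
Qed.
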